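(* Suppose the conditional gradient algorithm chooses $\theta_k$ by the exact line search $\theta_k\in\arg\min_{\theta\in[0,1]}\{(1-\theta)\mathrm{gap}(x_k,g_k)+\mathcal D(x_k,s_k,\theta)\}$ and $(\mathcal D,\mathrm{gap})$ satisfies the $(q,0)$-growth property for some $q>1$ and $M>0$, i.e. $\mathcal D(x,s,\theta)\le M\theta^q/q$ for all $x\in\mathrm{dom}(\Psi)$, $s\in\partial\Psi^*(-\nabla f(x))$, $\theta\in[0,1]$. Then $\mathrm{gap}_1\le M/q$ and for all $k\ge1$ \[ \mathrm{gap}_k\le M\Big(\frac{q}{k-1+q^{\frac{q}{q-1}}}\Big)^{q-1}. \] In particular, for $q=2$, $\mathrm{gap}_k\le \frac{2M}{k+3}$ for all $k\ge1$.
   Context: Let $f,\Psi:\mathbb{R}^n\to\mathbb{R}\cup\{\infty\}$ be closed proper convex functions such that (A1) $f$ is differentiable on $\mathrm{dom}(\Psi)$, and (A2) for every $x\in\mathrm{dom}(f)$ the set $\arg\min_s\{\langle\nabla f(x),s\rangle+\Psi(s)\}$ is nonempty. $f^*,\Psi^*$ denote convex conjugates; $\arg\min_y\{\langle g,y\rangle+\Psi(y)\}=\partial\Psi^*(-g)$. $D_f(y,x)=f(y)-f(x)-\langle\nabla f(x),y-x\rangle$. Duality gap: $\mathrm{gap}(x,u)=f(x)+\Psi(x)+f^*(u)+\Psi^*(-u)$ for $x\in\mathrm{dom}(\Psi)$, $u\in\mathrm{dom}(f^* )$. For $x,s\in\mathrm{dom}(\Psi)$, $\theta\in[0,1]$: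 $\mathcal{D}(x,s,\theta)=D_f(x+\theta(s-x),x)+\Psi(x+\theta(s-x))-(1-\theta)\Psi(x)-\theta\Psi(s)$. Conditional gradient algorithm: given $x_0\in\mathrm{dom}(\Psi)$, for $k=0,1,2,\dots$ let $g_k=\nabla f(x_k)$, pick $s_k\in\arg\min_y\{\langle g_k,y\rangle+\Psi(y)\}$ and $\theta_k\in[0,1]$, and set $x_{k+1}=(1-\theta_k)x_k+\theta_k s_k$. The best duality gaps are $\mathrm{gap}_k=\min_{i=0,\dots,k}\mathrm{gap}(x_k,g_i)$. *)

(* Defs.v *)
From HB Require Import structures.
From mathcomp Require Import all_boot all_order all_algebra.
From mathcomp Require Import all_classical all_reals all_analysis.
Set Implicit Arguments. Unset Strict Implicit. Unset Printing Implicit Defensive.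
Import Order.TTheory GRing.Theory Num.Theory.
Import numFieldNormedType.Exports.
Local Open Scope classical_set_scope.
Local Open Scope ring_scope.

Section CG.
Variables (R : realType) (n : nat).
Notation V := 'rV[R]_n.

Definition dotv (u v : V) : R := \sum_(i < n) u ord0 i * v ord0 i.

Definition edom (f : V -> \bar R) : set V := [set x | (f x < +oo)%E].

Definition proper_fun (f : V -> \bar R) : Prop :=
  (forall x, f x != -oo%E) /\ exists x, (f x < +oo)%E.

Definition convex_fun (f : V -> \bar R) : Prop :=
  forall (x y : V) (t : R), 0 <= t <= 1 ->
    (f ((1 - t) *: x + t *: y)%R <= (1 - t)%R%:E * f x + t%:E * f y)%E.

(* closed = lower semicontinuous = all sublevel sets closed *)
Definition closed_fun (f : V -> \bar R) : Prop :=
  forall a : R, closed [set x | (f x <= a%:E)%E].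

Definition closed_proper_convex (f : V -> \bar R) : Prop :=
  [/\ closed_fun f, proper_fun f & convex_fun f].

Definition is_gradient (f : V -> \bar R) (x g : V) : Prop :=
  exists F : V -> R, (\forall y \near x, f y = (F y)%:E) /\
    differentiable F x /\ (forall h, 'd F x h = dotv g h).

Definition conj_fun (f : V -> \bar R) (u : V) : \bar R :=
  ereal_sup (range (fun x => ((dotv u x)%:E - f x)%E)).

Definition is_argmin_lin (Psi : V -> \bar R) (g s : V) : Prop :=
  forall y, ((dotv g s)%:E + Psi s <= (dotv g y)%:E + Psi y)%E.

Definition gap (f Psi : V -> \bar R) (x u : V) : \bar R :=
  (f x + Psi x + conj_fun f u + conj_fun Psi (- u)%R)%E.

Definition bregman (f : V -> \bar R) (gf : V -> V) (y x : V) : \bar R :=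
  (f y - f x - (dotv (gf x) (y - x)%R)%:E)%E.

Definition Dcal (f Psi : V -> \bar R) (gf : V -> V) (x s : V) (t : R) : \bar R :=
  let y := (x + t *: (s - x))%R in
  (bregman f gf y x + Psi y - (1 - t)%R%:E * Psi x - t%:E * Psi s)%E.

(* best duality gap gap_k = min_{i=0..k} gap(x_k, g_i) *)
Definition best_gap (f Psi : V -> \bar R) (gf : V -> V) (x : nat -> V) (k : nat)
  : \bar R :=
  \big[Order.min/+oo%E]_(i < k.+1) gap f Psi (x k) (gf (x i)).

End CG.

(* Main.v *)
Set Warnings "-all".
Require Import Defs.
From HB Require Import structures.
From mathcomp Require Import all_boot all_order all_algebra.
From mathcomp Require Import all_classical all_reals all_analysis.
From mathcomp Require Import ring lra.
Import Order.TTheory GRing.Theory Num.Theory.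
Import numFieldNormedType.Exports.
Local Open Scope classical_set_scope.
Local Open Scope ring_scope.

Section Core.
Variable R : realType.

Lemma cg_bern (w r : R) : 0 <= w < 1 -> 0 < r -> 1 + r * w <= ((1 - w) `^ r)^-1.
Proof.
move=> /andP[w0 w1] r0.
have hw : 1 - w != 0 by apply/lt0r_neq0; lra.
rewrite /powR (negbTE hw) -expRN.
apply: le_trans (expR_ge1Dx _).
rewrite lerD2l -mulrN ler_wpM2l ?(ltW r0) //.
have := @le_ln1Dx R (- w); rewrite -/(1 - w) => H.
rewrite lerNr; apply: H; lra.
Qed.

Lemma powR_gt0' (a x : R) : 0 < a -> 0 < a `^ x.
Proof. exact: powR_gt0. Qed.

Lemma cg_step (q M a b : R) : 1 < q -> 0 < M -> 0 < a -> a < M / q -> 0 < b ->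
  (forall t, 0 <= t <= 1 -> b <= a - t * a + M * t `^ q / q) ->
  ((a `^ (q-1)^-1)^-1) + ((M^-1) `^ (q-1)^-1) / q <= (b `^ (q-1)^-1)^-1.
Proof.
move=> q1 M0 a0 aM b0 H.
set r := (q-1)^-1.
have r0 : 0 < r by rewrite invr_gt0 subr_gt0.
have rq : r * (q - 1) = 1 by rewrite mulVf // subr_eq0 gt_eqF.
have q0 : 0 < q by lra.
set t := (a / M) `^ r.
have t0 : 0 < t by apply: powR_gt0; exact: divr_gt0.
have aM1 : a / M <= 1.
  rewrite ler_pdivrMr // mul1r; apply: ltW; apply: (lt_trans aM).
  by rewrite ltr_pdivrMr // ltr_pMr.
have t1 : t <= 1.
  apply: (@le_trans _ _ (1 `^ r)); last by rewrite powR1.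
  rewrite /t; apply: ge0_ler_powR; rewrite ?(ltW r0) //.
    by rewrite nnegrE divr_ge0 // ltW.
  by rewrite nnegrE.
have tq : t `^ q = t * (a / M).
  rewrite /t -powRrM (_ : r * q = r + 1); last by rewrite -[X in _ = _ + X]rq; ring.
  by rewrite powRD ?powRr1 ?divr_ge0 ?(ltW a0) ?(ltW M0) // mulf_neq0 ?invr_eq0 ?lt0r_neq0 ?implybT.
have := H t; rewrite (ltW t0) t1 => /(_ isT) Hb.
rewrite tq in Hb.
have Hb' : b <= a * (1 - t * (1 - q^-1)).
  apply: (le_trans Hb); rewrite le_eqVlt; apply/orP; left; apply/eqP. field. by rewrite !lt0r_neq0.
set w := t * (1 - q^-1) in Hb'.
have qi : 0 < q^-1 < 1 by rewrite invr_gt0 q0 /= invf_lt1.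
have w0 : 0 <= w < 1.
  apply/andP; split; first by rewrite /w mulr_ge0 ?(ltW t0) //; lra.
  rewrite /w; apply: (le_lt_trans (y := 1 * (1 - q^-1))); last lra.
  by rewrite ler_wpM2r //; lra.
have aw0 : 0 < a * (1 - w) by apply: mulr_gt0 => //; lra.
have E1 : ((a * (1 - w)) `^ r)^-1 <= (b `^ r)^-1.
  rewrite lef_pV2 ?posrE ?powR_gt0 //.
  by apply: ge0_ler_powR; rewrite ?nnegrE ?(ltW r0) ?(ltW b0) ?(ltW aw0).
apply: le_trans E1.
rewrite powRM ?(ltW a0) //; last lra.
rewrite invfM.
have Hcg_bern := cg_bern _ _ w0 r0.
have pa0 : 0 < (a `^ r)^-1 by rewrite invr_gt0 powR_gt0.
apply: le_trans (ler_wpM2l (ltW pa0) Hcg_bern).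
have Ht : (a `^ r)^-1 * t = M^-1 `^ r.
  rewrite /t powRM ?(ltW a0) ?invr_ge0 ?(ltW M0) // mulrA mulVf ?mul1r //.
  exact/lt0r_neq0/powR_gt0.
rewrite mulrDr mulr1 lerD2l -Ht /w.
rewrite le_eqVlt; apply/orP; left; apply/eqP.
have -> : 1 - q^-1 = (q - 1) / q by field; apply/lt0r_neq0.
transitivity ((a `^ r)^-1 * t * (r * (q - 1)) / q); first by rewrite rq mulr1.
ring.
Qed.


Lemma cg_core (q M : R) (k : nat) (u : nat -> R) :
  1 < q -> 0 < M -> (1 <= k)%N ->
  (forall i, (1 <= i)%N -> (i < k)%N -> forall t, 0 <= t <= 1 ->
     u i.+1 <= u i - t * u i + M * t `^ q / q) ->
  u 1%N < M / q -> 0 < u k ->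
  u k < M * (q / (k%:R - 1 + q `^ (q / (q - 1)))) `^ (q - 1).
Proof.
move=> q1 M0 k1 H u1 uk.
set r := (q-1)^-1.
have r0 : 0 < r by rewrite invr_gt0 subr_gt0.
have rq : r * (q - 1) = 1 by rewrite mulVf // subr_eq0 gt_eqF.
have q0 : 0 < q by lra.
have mono : forall d i, (1 <= i)%N -> (i + d <= k)%N -> u (i + d)%N <= u i.
  elim=> [|d IH] i i1 idk; first by rewrite addn0.
  have idk' : (i + d < k)%N by rewrite -addnS.
  apply: le_trans (IH i i1 (ltnW idk')).
  have := H (i + d) (leq_trans i1 (leq_addr _ _)) idk' 0.
  rewrite lexx ler01 powR0 ?gt_eqF // => /(_ isT).
  by rewrite addnS !mul0r mulr0 mul0r subr0 addr0.
have pos : forall i, (1 <= i)%N -> (i <= k)%N -> 0 < u i.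
  move=> i i1 ik; apply: lt_le_trans uk _.
  by have := mono (k - i)%N i i1; rewrite subnKC // => /(_ (leqnn _)).
have ub : forall i, (1 <= i)%N -> (i <= k)%N -> u i < M / q.
  move=> i i1 ik; apply: le_lt_trans u1.
  by have := mono (i - 1)%N 1%N (leqnn _); rewrite subnKC // => /(_ ik).
set c := M^-1 `^ r / q.
have acc : forall d, (1 + d <= k)%N ->
    (u 1%N `^ r)^-1 + d%:R * c <= (u (1 + d)%N `^ r)^-1.
  elim=> [|d IH] dk; first by rewrite ?addn0 mul0r addr0.
  have dk' : (1 + d < k)%N by rewrite -addnS.
  have IH' := IH (ltnW dk').
  have St := @cg_step q M _ _ q1 M0 (pos _ (leq_addr _ _) (ltnW dk')) (ub _ (leq_addr _ _) (ltnW dk'))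
     (pos _ (leq_addr _ _) dk') (H _ (leq_addr _ _) dk').
  rewrite addnS -natr1 mulrDl mul1r.
  move: IH' St; rewrite -/r -/c.
  set X := d%:R * c. lra.
have K := acc (k - 1)%N; rewrite subnKC // in K; have {}K := K (leqnn _).
have Mq0 : 0 < M / q by rewrite divr_gt0.
have P1 : ((M / q) `^ r)^-1 < (u 1%N `^ r)^-1.
  rewrite ltf_pV2 ?posrE ?powR_gt0 //; last exact: pos.
  by apply: gt0_ltr_powR; rewrite ?nnegrE ?(ltW Mq0) // ltW // (pos 1%N).
set m := M `^ r.
have m0 : 0 < m by rewrite powR_gt0.
set Q := q `^ r.
have Q0 : 0 < Q by rewrite powR_gt0.
have Minv : M^-1 `^ r = m^-1.
  apply: (mulfI (lt0r_neq0 m0)); rewrite mulfV ?(lt0r_neq0 m0) // /m -powRM ?(ltW M0) ?invr_ge0 ?(ltW M0) //.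
  by rewrite mulfV ?(lt0r_neq0 M0) // powR1.
have qinv : q^-1 `^ r = Q^-1.
  apply: (mulfI (lt0r_neq0 Q0)); rewrite mulfV ?(lt0r_neq0 Q0) // /Q -powRM ?(ltW q0) ?invr_ge0 ?(ltW q0) //.
  by rewrite mulfV ?(lt0r_neq0 q0) // powR1.
have pMq : ((M / q) `^ r)^-1 = Q / m.
  by rewrite powRM ?(ltW M0) ?invr_ge0 ?(ltW q0) // qinv -/m invfM invrK mulrC.
have qq : q `^ (q / (q - 1)) = q * Q.
  rewrite (_ : q / (q - 1) = 1 + r); last first.
    by rewrite /r; field; rewrite subr_eq0 gt_eqF.
  by rewrite powRD ?powRr1 ?(ltW q0) // (lt0r_neq0 q0) implybT.
set D := k%:R - 1 + q `^ (q / (q - 1)).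
have k1R : 1 <= (k%:R : R) by rewrite ler1n.
have D0 : 0 < D by rewrite /D qq; apply: ltr_pwDr; [exact: mulr_gt0|lra].
have cE : c = m^-1 / q by rewrite /c Minv.
have KK : D / (m * q) < (u k `^ r)^-1.
  have -> : D / (m * q) = Q / m + (k%:R - 1) * c.
    by rewrite cE /D qq; field; rewrite !lt0r_neq0.
  move: K P1; rewrite natrB // pMq.
  set Y := (k%:R - 1) * c; lra.
set U := u k `^ r.
have U0 : 0 < U by rewrite powR_gt0.
have UD : U < m * q / D.
  rewrite -ltf_pV2 ?posrE ?divr_gt0 ?mulr_gt0 // invf_div.
  by move: KK; rewrite -/U mulrC.
have -> : u k = U `^ (q - 1) by rewrite /U -powRrM rq powRr1 // ltW.
have -> : M = m `^ (q - 1) by rewrite /m -powRrM rq powRr1 // ltW.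
rewrite -powRM ?(ltW m0) ?divr_ge0 ?(ltW q0) ?(ltW D0) //.
apply: gt0_ltr_powR; rewrite ?subr_gt0 ?nnegrE ?(ltW U0) //.
  by rewrite mulr_ge0 ?divr_ge0 ?(ltW m0) ?(ltW q0) ?(ltW D0).
by rewrite mulrA.
Qed.
End Core.

Section S.
Variables (R : realType) (n : nat).
Notation V := 'rV[R]_n.

Lemma right_of_dnbhs {g : R -> R} {l : R} :
  g @ 0^' --> l -> g @ 0^'+ --> l.
Proof.
move=> H; apply: cvg_trans H => A /=.
rewrite /nbhs /= /dnbhs /within /=.
apply: filterS => x H /lt0r_neq0; exact: H.
Qed.

Lemma grad_ineq (f : V -> \bar R) (x g : V) : convex_fun f ->
  (forall y, f y != -oo%E) -> is_gradient f x g ->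
  forall y, (f x + (dotv g (y - x))%:E <= f y)%E.
Proof.
move=> cvx fN [F [Hnear [Hdiff Hd]]] y.
have fxE : f x = (F x)%:E := nbhs_singleton Hnear.
case fyE: (f y) => [c| |]; last first.
- by have := fN y; rewrite fyE.
- by rewrite leey.
rewrite fxE -EFinD lee_fin -lerBrDl.
set v := y - x.
have Hder : derivable F x v := diff_derivable Hdiff.
rewrite -Hd -deriveE //.
have Hq : (fun h : R => h^-1 * (F (h *: v + x) - F x)) @ 0^' --> 'D_v F x := Hder.
apply: (cvgr_to_le (right_of_dnbhs Hq)).
have Hc : (fun h : R => h *: v + x) @ 0 --> 0 *: v + x.
  apply: cvgD; last exact: cvg_cst.
  apply: cvgZl; exact: cvg_id.
rewrite scale0r add0r in Hc.
have H1 : \forall h \near (0:R), f (h *: v + x) = (F (h *: v + x))%:E.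
  exact: Hc _ Hnear.
near=> h.
have h0 : 0 < h by near: h; exact: nbhs_right_gt.
have h1 : h <= 1 by near: h; exact: nbhs_right_ltW.
have Hf : f (h *: v + x) = (F (h *: v + x))%:E.
  near: h; move: H1; rewrite /nbhs /= /within /=; apply: filterS => z H _; exact: H.
have := cvx x y h; rewrite (ltW h0) h1 => /(_ isT).
have -> : (1 - h) *: x + h *: y = h *: v + x.
  by rewrite /v scalerBr scalerBl scale1r addrAC [RHS]addrC [RHS]addrA.
rewrite Hf fxE fyE -!EFinM -EFinD lee_fin => Hle /=.
rewrite ler_pdivrMl // mulrBr; move: Hle; rewrite mulrBl mul1r.
lra.
Unshelve. all: by end_near.
Qed.

Lemma dotvD (g a b : V) : dotv g (a + b) = dotv g a + dotv g b.
Proof. by rewrite /dotv -big_split; apply: eq_bigr => i _; rewrite mxE mulrDr. Qed.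

Lemma dotvZ (g a : V) (t : R) : dotv g (t *: a) = t * dotv g a.
Proof. by rewrite /dotv mulr_sumr; apply: eq_bigr => i _; rewrite mxE mulrCA. Qed.

Lemma dotvN (g a : V) : dotv g (- a) = - dotv g a.
Proof. by rewrite -scaleN1r dotvZ mulN1r. Qed.

Lemma dotvB (g a b : V) : dotv g (a - b) = dotv g a - dotv g b.
Proof. by rewrite dotvD dotvN. Qed.

Lemma dotvNl (g a : V) : dotv (- g) a = - dotv g a.
Proof. by rewrite /dotv -sumrN; apply: eq_bigr => i _; rewrite mxE mulNr. Qed.

Lemma fin_edom {Psi : V -> \bar R} {y} : proper_fun Psi -> edom Psi y ->
  Psi y = (fine (Psi y))%:E.
Proof.
move=> [PN _]; rewrite /edom /=; have := PN y.
by case: (Psi y).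
Qed.

Lemma conv_edom (Psi : V -> \bar R) a b t : convex_fun Psi -> proper_fun Psi ->
  edom Psi a -> edom Psi b -> 0 <= t <= 1 -> edom Psi ((1 - t) *: a + t *: b).
Proof.
move=> cvx hP ha hb ht; rewrite /edom /=.
apply: le_lt_trans (cvx a b t ht) _.
by rewrite (fin_edom hP ha) (fin_edom hP hb) -!EFinM -EFinD ltry.
Qed.

Lemma argmin_edom (Psi : V -> \bar R) g s : proper_fun Psi ->
  is_argmin_lin Psi g s -> edom Psi s.
Proof.
move=> hP H; case: (hP) => PN [z Hz].
have := H z; rewrite (fin_edom hP Hz) -EFinD; rewrite /edom /=.
case E: (Psi s) => [c||] //= _; exact: ltry.
Qed.

Lemma grad_fin {f : V -> \bar R} {y g} : is_gradient f y g -> f y = (fine (f y))%:E.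
Proof. by move=> [F [Hn _]]; rewrite (nbhs_singleton Hn). Qed.

Lemma sup_attain (h : V -> \bar R) x0 : (forall y, (h y <= h x0)%E) ->
  ereal_sup (range h) = h x0.
Proof.
move=> H; apply/eqP; rewrite eq_le; apply/andP; split.
  by apply: ub_ereal_sup => _ [y _ <-].
by apply: ereal_sup_ubound; exists x0.
Qed.

Lemma conj_grad (f : V -> \bar R) x g a :
  (forall y, (f x + (dotv g (y - x))%:E <= f y)%E) -> f x = a%:E ->
  conj_fun f g = (dotv g x - a)%:E.
Proof.
move=> H fx; rewrite /conj_fun.
rewrite (_ : (dotv g x - a)%:E = ((dotv g x)%:E - f x)%E); last by rewrite fx.
apply: sup_attain => y; rewrite fx.
have := H y; rewrite fx.
case: (f y) => [c||] //=.
  rewrite -EFinD -!EFinB !lee_fin dotvB; lra.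
by rewrite addeNy leNye.
Qed.

Lemma conj_argmin (Psi : V -> \bar R) g s b :
  is_argmin_lin Psi g s -> Psi s = b%:E ->
  conj_fun Psi (- g) = (- dotv g s - b)%:E.
Proof.
move=> H ps; rewrite /conj_fun.
rewrite (_ : (- dotv g s - b)%:E = ((dotv (-g) s)%:E - Psi s)%E); last by rewrite ps dotvNl.
apply: sup_attain => y; rewrite ps.
have := H y; rewrite ps.
case: (Psi y) => [c||] //=.
  rewrite -!EFinD !lee_fin !dotvNl; lra.
by rewrite addeNy leNye.
Qed.
End S.
Arguments grad_ineq {R n f x g}.
Arguments grad_fin {R n f y g}.
Arguments fin_edom {R n Psi y}.
Arguments conj_grad {R n f x g a}.
Arguments conj_argmin {R n Psi g s b}.
Arguments argmin_edom {R n Psi g s}.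
Arguments conv_edom {R n Psi a b t}.
Arguments cg_core {R q M k u}.

Theorem mainTheorem4 (R : realType) (n : nat) (f Psi : 'rV[R]_n -> \bar R)
  (gf : 'rV[R]_n -> 'rV[R]_n)
  (x s : nat -> 'rV[R]_n) (theta : nat -> R) (q M : R) :
  closed_proper_convex f -> closed_proper_convex Psi ->
  (* (A1): f differentiable on dom(Psi), with gradient gf *)
  (forall y, edom Psi y -> is_gradient f y (gf y)) ->
  (* (A2) *)
  (forall y g, is_gradient f y g -> exists z, is_argmin_lin Psi g z) ->
  (* conditional gradient algorithm with exact line search *)
  edom Psi (x 0%N) ->
  (forall k, is_argmin_lin Psi (gf (x k)) (s k)) ->
  (forall k, 0 <= theta k <= 1 /\
     forall t, 0 <= t <= 1 ->
       ((1 - theta k)%:E * gap f Psi (x k) (gf (x k))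
          + Dcal f Psi gf (x k) (s k) (theta k)
        <= (1 - t)%:E * gap f Psi (x k) (gf (x k))
          + Dcal f Psi gf (x k) (s k) t)%E) ->
  (forall k, x k.+1 = (1 - theta k) *: x k + theta k *: s k) ->
  (* (q,0)-growth property *)
  1 < q -> 0 < M ->
  (forall y z t, edom Psi y -> is_argmin_lin Psi (gf y) z -> 0 <= t <= 1 ->
     (Dcal f Psi gf y z t <= (M * t `^ q / q)%:E)%E) ->
  (best_gap f Psi gf x 1 <= (M / q)%:E)%E /\
  (forall k : nat, (1 <= k)%N ->
     (best_gap f Psi gf x k
        <= (M * (q / (k%:R - 1 + q `^ (q / (q - 1)))) `^ (q - 1))%:E)%E) /\
  (q = 2 -> forall k : nat, (1 <= k)%N ->
     (best_gap f Psi gf x k <= (2 * M / (k%:R + 3))%:E)%E).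
Proof.
move=> cf cP grad A2 x0d sarg ls xrec q1 M0 growth.
case: cf => _ fP fC; case: cP => _ PP PC.
have fN : forall y, f y != -oo%E by case: fP.
have sd : forall k, edom Psi (s k) by move=> k; exact: argmin_edom PP (sarg k).
have xd : forall k, edom Psi (x k).
  elim=> // k IH; rewrite xrec; apply: conv_edom => //; exact: (ls k).1.
have gr : forall k, is_gradient f (x k) (gf (x k)) by move=> k; exact: grad.
set Fr := fun k => fine (f (x k)) + fine (Psi (x k)).
set G := fun i => fine (Psi (x i)) - fine (Psi (s i)) + dotv (gf (x i)) (x i - s i).
have gapE : forall k i, gap f Psi (x k) (gf (x i)) = (Fr k - Fr i + G i)%:E.
  move=> k i; rewrite /gap (conj_grad (grad_ineq fC fN (gr i)) (grad_fin (gr i))).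
  rewrite (conj_argmin (sarg i) (fin_edom PP (sd i))).
  rewrite (grad_fin (gr k)) (fin_edom PP (xd k)) -!EFinD; congr EFin.
  rewrite /Fr /G dotvB; ring.
have decr : forall i t, 0 <= t <= 1 -> Fr i.+1 <= Fr i - t * G i + M * t `^ q / q.
  move=> i t ht.
  have ptE : forall t, (1 - t) *: x i + t *: s i = x i + t *: (s i - x i).
    by move=> t'; rewrite scalerBr scalerBl scale1r [RHS]addrA addrAC.
  have yd : forall t, 0 <= t <= 1 -> edom Psi (x i + t *: (s i - x i)).
    by move=> t' ht'; rewrite -ptE; apply: conv_edom.
  have DE : forall t, 0 <= t <= 1 -> Dcal f Psi gf (x i) (s i) t =
     (fine (f (x i + t *: (s i - x i))) - fine (f (x i))
      - t * dotv (gf (x i)) (s i - x i) + fine (Psi (x i + t *: (s i - x i)))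
      - (1 - t) * fine (Psi (x i)) - t * fine (Psi (s i)))%:E.
    move=> t' ht'; rewrite /Dcal /bregman /=.
    rewrite (grad_fin (grad _ (yd t' ht'))) (fin_edom PP (yd t' ht')).
    rewrite (grad_fin (gr i)) (fin_edom PP (xd i)) (fin_edom PP (sd i)).
    have dE : x i + t' *: (s i - x i) - x i = t' *: (s i - x i) by rewrite addrAC subrr add0r.
    rewrite dE dotvZ /=.
    by rewrite -!EFinD.
  have [th1 lsi] := ls i.
  have := lsi t ht; rewrite gapE (DE _ th1) (DE _ ht) -!EFinM -!EFinD lee_fin.
  have := growth (x i) (s i) t (xd i) (sarg i) ht; rewrite (DE _ ht) lee_fin.
  rewrite /Fr xrec ptE /G !dotvB.
  set fy := fine (f (x i + theta i *: _)).
  set py := fine (Psi (x i + theta i *: _)).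
  set fz := fine (f (x i + t *: _)).
  set pz := fine (Psi (x i + t *: _)).
  set d1 := dotv _ (s i); set d2 := dotv _ (x i).
  set fx := fine (f (x i)); set px := fine (Psi (x i)); set ps := fine (Psi (s i)).
  set th := theta i; set tq := M * t `^ q / q.
  move=> Hg Hl; nra.
have key : forall k B, (1 <= k)%N -> (B%:E < best_gap f Psi gf x k)%E ->
    (B + Fr 1%N - Fr k < M / q) /\
    (0 < B -> B < M * (q / (k%:R - 1 + q `^ (q / (q - 1)))) `^ (q - 1)).
  move=> k B k1 HB.
  have hb : forall i, (i < k.+1)%N -> B < Fr k - Fr i + G i.
    move: HB; rewrite /best_gap => /bigmin_gtP [_ H] i ik.
    by have := H (Ordinal ik) isT; rewrite gapE lte_fin.
  have u1 : B + Fr 1%N - Fr k < M / q.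
    have := decr 0%N 1; rewrite ler01 lexx powR1 /= mul1r mulr1 => /(_ isT).
    have := hb 0%N isT; lra.
  split => // B0.
  have := @cg_core _ q M k (fun j => B + Fr j - Fr k) q1 M0 k1.
  rewrite /= addrK => H; apply: H => //.
  move=> i i1 ik t ht.
  have Hd := decr i t ht.
  have Hb := hb i (ltnW ik).
  have t0 : 0 <= t by case/andP: ht.
  have := ler_wpM2l t0 (ltW Hb).
  move: Hd Hb; set tq := M * t `^ q / q; set Gi := G i; nra.
have q0 : 0 < q by lra.
have main2 : forall k : nat, (1 <= k)%N ->
     (best_gap f Psi gf x k
        <= (M * (q / (k%:R - 1 + q `^ (q / (q - 1)))) `^ (q - 1))%:E)%E.
  move=> k k1; rewrite leNgt; apply/negP => H.
  have k1R : 1 <= (k%:R : R) by rewrite ler1n.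
  have B0 : 0 < M * (q / (k%:R - 1 + q `^ (q / (q - 1)))) `^ (q - 1).
    apply: mulr_gt0 => //; apply: powR_gt0; apply: divr_gt0 => //.
    have := @powR_gt0 _ q (q / (q - 1)) q0; lra.
  by have := (key k _ k1 H).2 B0; rewrite ltxx.
split.
  rewrite leNgt; apply/negP => H.
  have := (key 1%N _ (leqnn _) H).1; lra.
split => // q2 k k1.
have := main2 k k1; rewrite q2.
have -> : (2:R) / (2 - 1) = 2%:R by field.
rewrite powR_mulrn ?ler0n // (_ : (2:R) - 1 = 1) ?powRr1; last by field.
  have -> : (k%:R - 1 + 2 ^+ 2 : R) = k%:R + 3 by ring.
  by rewrite [2 * M]mulrC -mulrA.
rewrite divr_ge0 //; have : (1:R) <= k%:R by rewrite ler1n.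
rewrite expr2; lra.
Qed.
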